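(* Let $(U,R_1)$ and $(V,R_2)$ be approximation spaces with binary operations $*_1$ on $U$ and $*_2$ on $V$. Equip $U\times V$ with the equivalence relation $R$ given by $(x,y)R(x',y')$ iff $xR_1x'$ and $yR_2y'$, and with the binary operation $(x,y)*(x',y')=(x*_1x',\,y*_2y')$. If $G_1\subseteq U$ and $G_2\subseteq V$ are rough groups, then $G_1\times G_2\subseteq U\times V$ is a rough group in the approximation space $(U\times V,R)$.
   Context: An approximation space is a pair $(U,R)$ with $U$ a set and $R$ an equivalence relation on $U$; for $X\subseteq U$, the upper approximation is $\overline{X}=\bigcup\{[x]_R : [x]_R\cap X\neq\emptyset\}$ and the lower approximation is $\underline{X}=\bigcup\{[x]_R : [x]_R\subseteq X\}$. Given a binary operation (written $xy$) on $U$, a subset $G\subseteq U$ is a rough group if: (1) $xy\in\overline{G}$ for all $x,y\in G$; (2) $(xy)z=x(yz)$ for all $x,y,z\in\overline{G}$; (3) there is $e\in\overline{G}$ with $xe=ex=x$ for all $x\in G$; (4) for every $x\in G$ there is $y\in G$ with $xy=yx=e$. *)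

(* Defs.v *)
From Stdlib Require Import Relations.

Definition eq_class {U : Type} (R : relation U) (x : U) : U -> Prop :=
  fun y => R x y.

Definition upper_approx {U : Type} (R : relation U) (X : U -> Prop) : U -> Prop :=
  fun z => exists x, eq_class R x z /\ exists w, eq_class R x w /\ X w.

Definition lower_approx {U : Type} (R : relation U) (X : U -> Prop) : U -> Prop :=
  fun z => exists x, eq_class R x z /\ forall w, eq_class R x w -> X w.

Definition rough_group {U : Type} (R : relation U) (op : U -> U -> U)
  (G : U -> Prop) : Prop :=
  (forall x y, G x -> G y -> upper_approx R G (op x y)) /\
  (forall x y z, upper_approx R G x -> upper_approx R G y -> upper_approx R G z ->
     op (op x y) z = op x (op y z)) /\
  (exists e, upper_approx R G e /\
     (forall x, G x -> op x e = x /\ op e x = x) /\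
     (forall x, G x -> exists y, G y /\ op x y = e /\ op y x = e)).

Definition prod_rel {U V : Type} (R1 : relation U) (R2 : relation V) :
  relation (U * V) :=
  fun p q => R1 (fst p) (fst q) /\ R2 (snd p) (snd q).

Definition prod_op {U V : Type} (op1 : U -> U -> U) (op2 : V -> V -> V) :
  U * V -> U * V -> U * V :=
  fun p q => (op1 (fst p) (fst q), op2 (snd p) (snd q)).

Definition prod_set {U V : Type} (G1 : U -> Prop) (G2 : V -> Prop) :
  U * V -> Prop :=
  fun p => G1 (fst p) /\ G2 (snd p).

(* Main.v *)
Require Import Defs.
From Stdlib Require Import Relations.

Lemma up_prod {U V : Type} (R1 : relation U) (R2 : relation V) G1 G2 (z : U * V) :
  upper_approx (prod_rel R1 R2) (prod_set G1 G2) z <->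
  upper_approx R1 G1 (fst z) /\ upper_approx R2 G2 (snd z).
Proof.
  unfold upper_approx, eq_class, prod_rel, prod_set; split.
  - intros [x [[H1 H2] [w [[H3 H4] [H5 H6]]]]].
    split; [exists (fst x) | exists (snd x)]; split; eauto.
  - intros [[x1 [H1 [w1 [H2 H3]]]] [x2 [H4 [w2 [H5 H6]]]]].
    exists (x1, x2); simpl; split; [auto|]. exists (w1, w2); simpl; auto.
Qed.

Theorem mainTheorem4 (U V : Type) (R1 : relation U) (R2 : relation V)
  (op1 : U -> U -> U) (op2 : V -> V -> V) (G1 : U -> Prop) (G2 : V -> Prop) :
  equivalence U R1 -> equivalence V R2 ->
  rough_group R1 op1 G1 -> rough_group R2 op2 G2 ->
  rough_group (prod_rel R1 R2) (prod_op op1 op2) (prod_set G1 G2).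
Proof.
  intros _ _ [A1 [B1 [e1 [E1 [I1 J1]]]]] [A2 [B2 [e2 [E2 [I2 J2]]]]].
  split; [|split].
  - intros [x1 x2] [y1 y2] [Hx1 Hx2] [Hy1 Hy2]. apply up_prod; simpl; auto.
  - intros [x1 x2] [y1 y2] [z1 z2] Hx Hy Hz.
    apply up_prod in Hx, Hy, Hz; simpl in *.
    destruct Hx, Hy, Hz. unfold prod_op; simpl. f_equal; auto.
  - exists (e1, e2). split; [apply up_prod; simpl; auto|split].
    + intros [x1 x2] [H1 H2]; simpl in *. unfold prod_op; simpl.
      destruct (I1 _ H1), (I2 _ H2). split; f_equal; auto.
    + intros [x1 x2] [H1 H2]; simpl in *.
      destruct (J1 _ H1) as [y1 [Y1 [P1 Q1]]], (J2 _ H2) as [y2 [Y2 [P2 Q2]]].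
      exists (y1, y2). unfold prod_set, prod_op; simpl.
      repeat split; auto; f_equal; auto.
Qed.
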